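(* Let $L$ be a link diagram with a checkerboard shading. The set of unshaded regions admits an alternating signing if and only if the following holds: for every shaded region $R$ and every connected component $\Gamma$ of the boundary of $R$ that is not a simple closed loop without vertices, the number of edges of $\Gamma$ is even. The same statement holds with the roles of shaded and unshaded regions interchanged.
   Context: Diagrams: a link (knot) diagram is the underlying graph of a regular projection of a link (knot) into $S^2$. Its vertices are the crossings, each of valence 4, and over/under information is ignored. Components without crossings are closed loops, each regarded as one edge with no vertices. Regions are the connected components of $S^2\setminus L$. A vertex or edge is incident to a region if it lies in the boundary of that region. Two regions are adjacent if they are incident to a common edge. Checkerboard shading: a checkerboard shading is a shading of some regions such that, of any two adjacent regions, exactly one is shaded. Alternating signing: let $\mathcal R$ be either the set of shaded regions or the set of unshaded regions. An alternating signing of $\mathcal R$ is an assignment of a sign $+$ or $-$ to each region of $\mathcal R$ such that every vertex of the diagram is incident to two regions of $\mathcal R$ carrying opposite signs. A diagram with such a signing of its shaded or of its unshaded regions is called an alternating sign diagram. *)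

(* Defs.v *)
From mathcomp Require Import all_boot fingroup perm.
Set Implicit Arguments. Unset Strict Implicit. Unset Printing Implicit Defensive.

(* A link diagram L (its underlying 4-valent graph in S^2, crossing
   information ignored) is encoded as:
   - D    : the darts (half-edges) at the crossings; each crossing has 4;
   - rot  : the cyclic rotation of darts around their crossing (orientation
            of S^2); crossings (vertices) = rot-orbits, all of size 4;
   - ed   : fixed-point free involution pairing the two ends of an edge;
            edges = {d, ed d};
   - the boundary walks of the connected components with crossings are the
     orbits of  phi d := rot (ed d)  (dart d's walk follows the edge of d
     and contains the corner between rot^-1 d and d at the crossing of d);
   - nl   : number of crossing-free components (closed loops, one edge
            each, two sides: "in" and "out");
   - Reg  : the regions of S^2 \ L; regD d is the region of the walk of d,
            regIn i / regOut i the regions on the two sides of loop i.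
   Realisability in S^2: every map component is spherical (Euler formula,
   summed over components) and the bipartite incidence multigraph between
   components of L and regions (one edge per boundary walk) is a tree
   (connected, #vertices = #edges + 1). *)
Record diagram := Diagram {
  D : finType;
  nl : nat;
  Reg : finType;
  ed : {perm D};
  rot : {perm D};
  regD : D -> Reg;
  regIn : 'I_nl -> Reg;
  regOut : 'I_nl -> Reg
}.
Arguments regD : clear implicits.
Arguments regIn : clear implicits.
Arguments regOut : clear implicits.

Definition phi (L : diagram) (d : D L) : D L := rot L (ed L d).

Definition map_adj (L : diagram) : rel (D L) :=
  [rel x y | (y == ed L x) || (y == rot L x) || (x == rot L y)].
Arguments map_adj : clear implicits.

Definition node (L : diagram) : finType := ((D L + 'I_(nl L)) + Reg L)%type.

Definition node_adj (L : diagram) : rel (node L) :=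
  fun x y =>
  match x, y with
  | inl (inl a), inl (inl b) => map_adj L a b || map_adj L b a
  | inl (inl a), inr r | inr r, inl (inl a) => regD L a == r
  | inl (inr i), inr r | inr r, inl (inr i) => (regIn L i == r) || (regOut L i == r)
  | _, _ => false
  end.
Arguments node_adj : clear implicits.

Definition link_diagram (L : diagram) : Prop :=
  [/\ (0 < #|D L| + nl L)%N,
      (forall d : D L, ed L (ed L d) = d /\ ed L d != d),
      (forall d : D L, fingraph.order (rot L) d = 4),
      (forall d : D L, regD L (phi d) = regD L d) &
    [/\
      (* each crossing component is a sphere: sum of V - E + F = 2 c *)
      fcard (rot L) (D L) + fcard (@phi L) (D L)
        = fcard (ed L) (D L) + 2 * n_comp (map_adj L) (D L),
      (forall x y : node L, connect (node_adj L) x y) &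
      (* tree: #regions + #components = #boundary walks + 1 *)
      #|Reg L| + (n_comp (map_adj L) (D L) + nl L)
        = fcard (@phi L) (D L) + 2 * nl L + 1 ] ].

Definition checkerboard (L : diagram) (sh : Reg L -> bool) : Prop :=
  (forall d : D L, sh (regD L d) != sh (regD L (ed L d))) /\
  (forall i : 'I_(nl L), sh (regIn L i) != sh (regOut L i)).

(* alternating signing of the set of regions R = {r | sh r = c}
   (c = false: unshaded regions, c = true: shaded regions).
   The regions incident to the crossing of d are the regD x, x at that
   crossing; a sign is a bool. *)
Definition alt_signing (L : diagram) (sh : Reg L -> bool) (c : bool) : Prop :=
  exists sign : Reg L -> bool,
    forall d : D L, exists x y : D L,
      [/\ fconnect (rot L) d x, fconnect (rot L) d y,
          sh (regD L x) = c, sh (regD L y) = c &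
          sign (regD L x) != sign (regD L y)].

Definition walk_edges (L : diagram) (d : D L) : nat :=
  #|[set [set x; ed L x] | x in [pred x | fconnect (@phi L) d x]]|.

(* The boundary
   components of R that are not vertex-free loops are exactly the walks
   (phi-orbits) of darts d with regD d = R. *)
Definition even_boundaries (L : diagram) (sh : Reg L -> bool) (c : bool) : Prop :=
  forall d : D L, sh (regD L d) = c -> ~~ odd (walk_edges d).

(* Main.v *)
Require Import Defs.
From mathcomp Require Import all_boot fingroup perm all_algebra zify.
Set Implicit Arguments. Unset Strict Implicit. Unset Printing Implicit Defensive.
Import GRing.Theory.
Local Open Scope ring_scope.

Lemma F2_add_self (x : 'F_2) : x + x = 0.
Proof. by rewrite -mulr2n -mulr_natr pchar_Fp_0 ?mulr0. Qed.

Lemma F2_cases (x : 'F_2) : x = 0 \/ x = 1.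
Proof. case: x => [[|[|n]]] Hn; [left|right|by []]; exact: val_inj. Qed.

Lemma card_F2fun (X : finType) : #|{: {ffun X -> 'F_2}}| = (2 ^ #|X|)%N.
Proof. by rewrite card_ffun card_Fp. Qed.

Section CardHom.
Variables (A B : finType) (f : {ffun A -> 'F_2} -> {ffun B -> 'F_2}).
Hypothesis fD : forall a b, f (a + b) = f a + f b.

Lemma f0 : f 0 = 0.
Proof. by apply/eqP; rewrite -(addrI (f 0) (_ : f 0 + f 0 = f 0 + 0)) // -fD !addr0. Qed.

Lemma card_hom : (#|[set a | f a == 0%R]| * #|[set f a | a in [set: {ffun A -> 'F_2}]]| = 2 ^ #|A|)%N.
Proof.
set K := [set a | f a == 0]; set I := [set f a | a in _].
pose g b := odflt 0 [pick a | f a == b].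
have fg : forall b, b \in I -> f (g b) = b.
  move=> b /imsetP [a _ ->]; rewrite /g; case: pickP => [a' /eqP //|/(_ a)].
  by rewrite eqxx.
pose m a := (f a, a - g (f a)).
have minj : injective m.
  move=> a a' [E1 E2]; move: E2; rewrite E1; exact: subIr.
rewrite mulnC -cardsX -card_F2fun -cardsT -(card_imset _ minj).
apply: eq_card => -[b k]; rewrite !inE /=; apply/andP/imsetP.
  move=> [Ib Kk]; exists (g b + k) => //.
  move: Kk => /eqP Kk.
  by rewrite /m fD Kk addr0 fg // [g b + k]addrC addrK.
move=> [a _ [-> ->]]; split; first by apply: imset_f.
have := fD (a - g (f a)) (g (f a)); rewrite subrK fg ?imset_f // => E.
by apply/eqP; apply: (addIr (f a)); rewrite add0r -E.
Qed.
End CardHom.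

Section Basics.
Variable L : diagram.
Local Notation rt := (Defs.rot L).
Local Notation ed := (Defs.ed L).
Local Notation regD := (Defs.regD L).
Variable Hed : forall d : D L, ed (ed d) = d /\ ed d != d.
Variable Hrot : forall d : D L, fingraph.order rt d = 4.
Variable Hphi : forall d : D L, regD (phi d) = regD d.

Lemma edK : involutive ed. Proof. by move=> d; case: (Hed d). Qed.
Lemma regD_rot a : regD (rt a) = regD (ed a).
Proof. by rewrite -[RHS]Hphi /phi edK. Qed.
Lemma rt_inj : injective rt. Proof. exact: perm_inj. Qed.
Lemma phi_inj : injective (@phi L).
Proof. by move=> x y; rewrite /phi => /perm_inj /perm_inj. Qed.
Lemma rt4 d : rt (rt (rt (rt d))) = d.
Proof. by have := iter_order rt_inj d; rewrite Hrot. Qed.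
Lemma rt_orbit d x : fconnect rt d x ->
  x \in [:: d; rt d; rt (rt d); rt (rt (rt d))].
Proof. by rewrite fconnect_orbit /orbit Hrot. Qed.
Lemma rt_conn d i : fconnect rt d (iter i rt d).
Proof. exact: fconnect_iter. Qed.
Lemma regD_iter n d : regD (iter n (@phi L) d) = regD d.
Proof. by elim: n => //= n IH; rewrite Hphi. Qed.
Lemma regD_fconn d x : fconnect (@phi L) d x -> regD x = regD d.
Proof. by move/iter_findex <-; rewrite regD_iter. Qed.
Lemma negb_neq (b : bool) : ~~ b = b -> False. Proof. by case: b. Qed.
Lemma iter_rt_phi y : rt (ed y) = @phi L y. Proof. by []. Qed.

Variable sh : Defs.Reg L -> bool.
Variable Hcb : forall d : D L, sh (regD d) != sh (regD (ed d)).

Lemma sh_ed a : sh (regD (ed a)) = ~~ sh (regD a).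
Proof. by have := Hcb a; case: (sh (regD a)); case: (sh (regD (ed a))). Qed.
Lemma sh_rot a : sh (regD (rt a)) = ~~ sh (regD a).
Proof. by rewrite regD_rot sh_ed. Qed.

Lemma walk_edges_order d : walk_edges d = fingraph.order (@phi L) d.
Proof.
rewrite /walk_edges card_in_imset; first by apply: eq_card.
move=> x y; rewrite !inE => Hx Hy E.
have : y \in [set x; ed x] by rewrite E !inE eqxx.
rewrite !inE => /orP [/eqP -> //| /eqP Ey].
have := Hcb x; rewrite -Ey (regD_fconn Hx) (regD_fconn Hy) eqxx //.
Qed.

Lemma easy c : alt_signing sh c -> even_boundaries sh (~~ c).
Proof.
move=> [sign Hs] d Hd; rewrite walk_edges_order.
set g := fun x => sign (regD (rt x)).
have Hg : forall y, sh (regD y) = ~~ c -> g (phi y) = ~~ g y.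
  move=> y Hy; set x := phi y.
  have Hx : sh (regD x) = ~~ c by rewrite /x Hphi.
  have Ex : rt (rt (rt x)) = ed y by rewrite /x /phi rt4.
  have [x1 [y1 [Cx1 Cy1 Sx1 Sy1 Dxy]]] := Hs x.
  have Hc : forall z, fconnect rt x z -> sh (regD z) = c ->
     regD z = regD (rt x) \/ regD z = regD (ed y).
    move=> z /rt_orbit; rewrite !inE => /or4P [] /eqP ->.
    - by rewrite Hx => /negb_neq.
    - by left.
    - by rewrite !sh_rot sh_ed Hy !negbK => /negb_neq.
    - by right; rewrite Ex.
  have Ey : regD (ed y) = regD (rt y) by rewrite regD_rot.
  move: Dxy; rewrite /g.
  case: (Hc _ Cx1 Sx1) => ->; case: (Hc _ Cy1 Sy1) => ->; rewrite ?eqxx // Ey.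
  - by case: (sign _); case: (sign _).
  - by case: (sign _); case: (sign _).
have Hit : forall n, g (iter n (@phi L) d) = odd n (+) g d.
  elim=> //= n IH; rewrite Hg ?IH; last by rewrite regD_iter.
  by case: (odd n); case: (g d).
have := Hit (fingraph.order (@phi L) d); rewrite iter_order; last exact: phi_inj.
by case: (odd _); case: (g d).
Qed.

Lemma ed_inj : injective ed. Proof. exact: perm_inj. Qed.
Lemma ed_sym : connect_sym (coerced_frel ed).
Proof. by move=> x y; apply: fconnect_sym; exact: ed_inj. Qed.
Lemma rt_sym : connect_sym (coerced_frel rt).
Proof. by move=> x y; apply: fconnect_sym; exact: rt_inj. Qed.
Lemma phi_sym : connect_sym (coerced_frel (@phi L)).
Proof. by move=> x y; apply: fconnect_sym; exact: phi_inj. Qed.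

Lemma ed_conn y z : fconnect ed y z -> z = y \/ z = ed y.
Proof.
move/iter_findex <-; elim: (findex _ _ _) => [|k IH] /=; first by left.
by case: IH => ->; [right|left; rewrite edK].
Qed.

Definition E1 := {x : D L | froot ed x == x}.
Definition edge (y : D L) : E1 := exist _ (froot ed y) (introT eqP (root_root ed_sym y)).
Lemma edgeE y : val (edge y) = froot ed y. Proof. by []. Qed.

Lemma froot_ed y : froot ed y = y \/ froot ed y = ed y.
Proof. by apply: ed_conn; apply: connect_root. Qed.

Lemma edge_eq y x : (edge y == edge x) = (y == x) || (y == ed x).
Proof.
rewrite -val_eqE /= fingraph.root_connect; last exact: ed_sym.
apply/idP/orP => [/ed_conn [->|->]|[/eqP->|/eqP->]].
- by left.
- by right; rewrite edK.
- exact: connect0.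
- by rewrite ed_sym fconnect1.
Qed.

Definition T1 := (E1 + 'I_(nl L))%type.
Definition vert (y : D L) := froot rt y.

Definition d1 (z : {ffun T1 -> 'F_2}) : {ffun D L -> 'F_2} :=
  [ffun v => \sum_(y | vert y == v) z (inl (edge y))].
Definition d2 (s : {ffun Reg L -> 'F_2}) : {ffun T1 -> 'F_2} :=
  [ffun e => match e with
             | inl x => s (regD (val x)) + s (regD (ed (val x)))
             | inr i => s (regIn L i) + s (regOut L i) end].

Lemma d1D a b : d1 (a + b) = d1 a + d1 b.
Proof. by apply/ffunP => v; rewrite !ffunE -big_split /=; apply: eq_bigr => y _; rewrite ffunE. Qed.
Lemma d2D a b : d2 (a + b) = d2 a + d2 b.
Proof.
apply/ffunP => -[x|i]; rewrite !ffunE /= addrACA //.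
Qed.

Lemma d2_edge s y : d2 s (inl (edge y)) = s (regD y) + s (regD (ed y)).
Proof. by rewrite ffunE edgeE; case: (froot_ed y) => ->; rewrite ?edK // addrC. Qed.

Lemma sum_rt (P : pred (D L)) (F : D L -> 'F_2) :
  (forall y, P (rt y) = P y) -> \sum_(y | P y) F (rt y) = \sum_(y | P y) F y.
Proof.
move=> HP; rewrite [RHS](reindex_inj rt_inj); apply: eq_bigl => y; by rewrite HP.
Qed.

Lemma vert_rt y : vert (rt y) = vert y.
Proof. by rewrite /vert; apply/esym/(fingraph.rootP rt_sym); exact: fconnect1. Qed.

Lemma d1d2 s : d1 (d2 s) = 0.
Proof.
apply/ffunP => v; rewrite !ffunE.
under eq_bigr => y _ do rewrite d2_edge -regD_rot.
rewrite big_split /= (@sum_rt (fun y => vert y == v) (fun y => s (regD y))) ?F2_add_self // => y; by rewrite vert_rt.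
Qed.

Lemma F2_eq (a b : 'F_2) : a + b = 0 -> a = b.
Proof. by move=> H; rewrite -[b]add0r -H -addrA F2_add_self addr0. Qed.

Variable Hconn : forall x y : node L, connect (node_adj L) x y.

Lemma ker_d2_const s : d2 s = 0 -> forall r r', s r = s r'.
Proof.
move=> Hs.
have Hz : forall e, d2 s e = 0 by move=> e; rewrite Hs ffunE.
have Hd : forall y, s (regD y) = s (regD (ed y)).
  by move=> y; apply: F2_eq; rewrite -d2_edge Hz.
have Hl : forall i, s (regIn L i) = s (regOut L i).
  by move=> i; apply: F2_eq; have := Hz (inr i); rewrite !ffunE.
have Hm : forall a b, map_adj L a b -> s (regD a) = s (regD b).
  move=> a b /orP [/orP [/eqP ->|/eqP ->]|/eqP ->] //.
  - by rewrite regD_rot.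
  - by rewrite regD_rot -Hd.
pose P (n : node L) := match n with
  | inl (inl a) => s (regD a) | inl (inr i) => s (regIn L i) | inr r => s r end.
have Hadj : forall x y, node_adj L x y -> P x = P y.
  move=> [[a|i]|r] [[b|j]|r'] //=.
  - by case/orP => /Hm // ->.
  - by move/eqP <-.
  - by case/orP => /eqP <-; rewrite ?Hl.
  - by move/eqP ->.
  - by case/orP => /eqP <-; rewrite ?Hl.
move=> r r'.
have Hcl : closed (node_adj L) [pred n | P n == s r].
  by move=> x y /Hadj Hxy; rewrite !inE Hxy.
have := closed_connect Hcl (Hconn (inr r) (inr r')); rewrite !inE eqxx /=.
by move/esym/eqP.
Qed.

Lemma card_ker_d2 : (#|[set s | d2 s == 0%R]| <= 2)%N.
Proof.
have Hsub : [set s | d2 s == 0%R] \subset [set (0 : {ffun Reg L -> 'F_2}); [ffun => 1]].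
  apply/subsetP => s; rewrite !inE => /eqP Hs.
  case: (pickP (fun _ : Reg L => true)) => [r0 _|none].
    case: (F2_cases (s r0)) => E; apply/orP; [left|right]; apply/eqP/ffunP => r;
      by rewrite !ffunE (ker_d2_const Hs r r0) E.
  by apply/orP; left; apply/eqP/ffunP => r; have := none r.
apply: leq_trans (subset_leq_card Hsub) _; rewrite cards2; by case: (_ != _).
Qed.

Definition delta (v : D L) : {ffun D L -> 'F_2} := [ffun w => (w == v)%:R].
Local Notation ma := (map_adj L).

Lemma ma_symm : symmetric ma.
Proof.
move=> x y; rewrite /map_adj /=.
apply/idP/idP => /orP [/orP [/eqP ->|/eqP ->]|/eqP ->]; rewrite ?edK ?eqxx ?orbT //.
Qed.
Lemma ma_sym : connect_sym ma. Proof. exact: sym_connect_sym ma_symm. Qed.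

Lemma ffun_add_self (X : finType) (f : {ffun X -> 'F_2}) : f + f = 0.
Proof. by apply/ffunP => x; rewrite !ffunE F2_add_self. Qed.
Lemma ffun_cancel (X : finType) (a b c : {ffun X -> 'F_2}) : (a + b) + (b + c) = a + c.
Proof. by rewrite addrA -(addrA a) ffun_add_self addr0. Qed.

Lemma d1_0 : d1 0 = 0.
Proof. by apply/ffunP => v; rewrite !ffunE big1 // => y _; rewrite ffunE. Qed.

Lemma inl_eq (a b : E1) : (inl a == inl b :> T1) = (a == b).
Proof. by apply/eqP/eqP => [[]|->]. Qed.

Lemma d1_edge x : d1 [ffun e => (e == inl (edge x))%:R] = delta (vert x) + delta (vert (ed x)).
Proof.
apply/ffunP => v; rewrite !ffunE.
under eq_bigr => y _ do rewrite ffunE inl_eq edge_eq.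
have Hx : ed x != x by case: (Hed x).
rewrite big_mkcond (bigD1 x) //= (bigD1 (ed x)) /=; last by rewrite Hx.
rewrite big1; last first.
  move=> y /andP [Hy1 Hy2]; rewrite (negbTE Hy1) (negbTE Hy2) /=.
  by case: (_ == v).
rewrite addr0 eqxx (negbTE Hx) /= eqxx [v == _]eq_sym [v == vert (ed x)]eq_sym.
by case: (vert x == v); case: (vert (ed x) == v).
Qed.

Lemma path_chain x y : connect ma x y -> exists z, d1 z = delta (vert x) + delta (vert y).
Proof.
move/connectP => [p]; elim: p x => [|x' p IH] x /=.
  by move=> _ ->; exists 0; rewrite d1_0 ffun_add_self.
case/andP => Hxx' Hp Hl; have [z Hz] := IH x' Hp Hl.
have [e He] : exists e, d1 e = delta (vert x) + delta (vert x').
  move: Hxx' => /orP [/orP [/eqP ->|/eqP ->]|/eqP ->].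
  - by exists [ffun e => (e == inl (edge x))%:R]; rewrite d1_edge.
  - by exists 0; rewrite d1_0 vert_rt ffun_add_self.
  - by exists 0; rewrite d1_0 vert_rt ffun_add_self.
by exists (e + z); rewrite d1D He Hz ffun_cancel.
Qed.

Lemma rt_ma x y : fconnect rt x y -> connect ma x y.
Proof.
apply: connect_sub => a b /= /eqP <-; apply: connect1.
by rewrite /map_adj /= eqxx orbT.
Qed.

Definition des (v : D L) := vert (fingraph.root ma v).

Lemma root_vert w : fingraph.root ma (vert w) = fingraph.root ma w.
Proof.
apply/esym/(fingraph.rootP ma_sym); apply: rt_ma; exact: connect_root.
Qed.

Lemma des_des v : des (des v) = des v.
Proof. by rewrite /des root_vert fingraph.root_root //; exact: ma_sym. Qed.

Definition Sv := [set v : D L | vert v == v].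
Definition Nv := Sv :\: [set v | des v == v].
Definition Mv := Sv :&: [set v | des v == v].

Definition u (A : {set D L}) := \sum_(v in A) (delta (vert v) + delta (des v)).
Definition Im1 := [set d1 z | z in [set: {ffun T1 -> 'F_2}]].

Lemma u_in A : u A \in Im1.
Proof.
apply: (big_ind (fun x => x \in Im1)).
- by apply/imsetP; exists 0; rewrite ?inE ?d1_0.
- move=> a b /imsetP [za _ ->] /imsetP [zb _ ->].
  by apply/imsetP; exists (za + zb); rewrite ?inE ?d1D.
- move=> v _; have [z Hz] := path_chain (connect_root ma v).
  by apply/imsetP; exists z; rewrite ?inE ?Hz.
Qed.

Lemma sum_ind (A : {set D L}) w : \sum_(v in A) ((w == v)%:R : 'F_2) = (w \in A)%:R.
Proof.
case: (boolP (w \in A)) => Hw.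
  rewrite (bigD1 w) //= eqxx big1 ?addr0 // => v /andP [_ Hv].
  by rewrite eq_sym (negbTE Hv).
by rewrite big1 // => v Hv; case: eqP Hv Hw => // ->->.
Qed.

Lemma u_val (A : {set D L}) w : A \subset Nv -> w \in Nv -> u A w = (w \in A)%:R.
Proof.
move=> /subsetP HA Hw; rewrite /u sum_ffunE -sum_ind; apply: eq_bigr => v Hv.
have := HA v Hv; rewrite !inE => /andP [Hdv Hvv].
move: Hw; rewrite !inE => /andP [Hdw _].
rewrite !ffunE (eqP Hvv).
have -> : (w == des v) = false.
  by apply/negbTE; apply: contra Hdw => /eqP ->; rewrite des_des.
by rewrite addr0.
Qed.

Lemma F2_nat_inj (a b : bool) : (a%:R : 'F_2) = b%:R -> a = b.
Proof. by case: a; case: b => //= /eqP; rewrite ?oner_eq0 // eq_sym oner_eq0. Qed.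

Lemma card_Im1 : (2 ^ #|Nv| <= #|Im1|)%N.
Proof.
rewrite -card_powerset -(@card_in_imset _ _ u).
  apply: subset_leq_card; apply/subsetP => x /imsetP [A _ ->]; exact: u_in.
move=> A B; rewrite !inE => HA HB E; apply/setP => w.
case: (boolP (w \in Nv)) => Hw.
  by apply: F2_nat_inj; rewrite -!u_val // E.
apply/idP/idP => H; [move/subsetP: HA => /(_ w H)|move/subsetP: HB => /(_ w H)];
  by rewrite (negbTE Hw).
Qed.

Lemma card_Sv : (#|Sv| <= #|Nv| + n_comp ma (D L))%N.
Proof.
rewrite /Nv -(cardsID [set v | des v == v] Sv) addnC leq_add2l -/Mv.
rewrite -(@card_in_imset _ _ (fingraph.root ma)).
  apply: subset_leq_card; apply/subsetP => x /imsetP [v _ ->].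
  by rewrite inE /= fingraph.roots_root //; exact: ma_sym.
move=> v w; rewrite !inE => /andP [_ /eqP Hv] /andP [_ /eqP Hw] E.
by rewrite -Hv -Hw /des E.
Qed.

Definition colb (x : D L) := odd (findex (@phi L) (froot (@phi L) x) x).

Lemma colb_phi c : even_boundaries sh (~~ c) ->
  forall x, sh (regD x) = ~~ c -> colb (phi x) = ~~ colb x.
Proof.
move=> Hev x Hx; rewrite /colb.
set r := froot (@phi L) x.
have Hrx : fconnect (@phi L) r x by rewrite phi_sym; exact: connect_root.
have -> : froot (@phi L) (phi x) = r.
  by apply/esym/(fingraph.rootP phi_sym); exact: fconnect1.
have Hn : fingraph.order (@phi L) r = fingraph.order (@phi L) x.
  by apply: eq_card => y; rewrite !inE; exact: (same_connect phi_sym Hrx y).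
have Hev' : ~~ odd (fingraph.order (@phi L) x) by rewrite -walk_edges_order; apply: Hev.
have Hk := findex_max Hrx; have Ex := iter_findex Hrx.
set k := findex _ r x in Hk Ex *.
have E : phi x = iter k.+1 (@phi L) r by rewrite /= Ex.
case: (ltngtP k.+1 (fingraph.order (@phi L) r)) => [Hlt|Hgt|Heq].
- by rewrite E findex_iter.
- by move: Hgt; rewrite ltnS leqNgt Hk.
- rewrite E Heq iter_order; last exact: phi_inj.
  by rewrite findex0 /=; move: Hev'; rewrite -Hn -Heq /=; case: (odd k).
Qed.

Lemma sum_orbit (x : D L) (F : D L -> 'F_2) :
  \sum_(y | fconnect rt x y) F y = F x + F (rt x) + F (rt (rt x)) + F (rt (rt (rt x))).
Proof.
rewrite -big_filter (@perm_big _ _ _ _ _ (orbit rt x)).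
  by rewrite /orbit Hrot /= !big_cons big_nil addr0 !addrA.
apply: uniq_perm; first by rewrite filter_uniq // /index_enum -enumT enum_uniq.
  exact: orbit_uniq.
by move=> y; rewrite mem_filter -fconnect_orbit mem_index_enum andbT.
Qed.

Variable c : bool.
Variable Hev : even_boundaries sh (~~ c).

Definition sd (x : D L) := if sh (regD x) == ~~ c then x else ed x.
Lemma nbeq (b : bool) : (b == ~~ b) = false. Proof. by case: b. Qed.

Lemma sd_ed x : sd (ed x) = sd x.
Proof.
rewrite /sd sh_ed; case: (boolP (sh (regD x) == ~~ c)) => /eqP H.
  by rewrite H negbK nbeq edK.
have -> : sh (regD x) = c by move: H; case: (sh _); case: (c).
by rewrite eqxx.
Qed.

Definition h : {ffun T1 -> 'F_2} :=
  [ffun e => match e with inl x => (colb (sd (val x)))%:R | inr _ => 0 end].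

Lemma h_edge y : h (inl (edge y)) = (colb (sd y))%:R.
Proof. by rewrite ffunE edgeE; case: (froot_ed y) => ->; rewrite ?sd_ed. Qed.

Lemma shaded_alt x : sh (regD x) = ~~ c -> [/\ sd x = x, sd (rt x) = ed (rt x),
   sd (rt (rt x)) = rt (rt x) & sd (rt (rt (rt x))) = ed (rt (rt (rt x)))].
Proof.
move=> Hx; rewrite /sd !sh_rot Hx !negbK eqxx nbeq.
by [].
Qed.

Lemma h_ker : d1 h = 0.
Proof.
apply/ffunP => v; rewrite !ffunE.
case: (pickP (fun y => vert y == v)) => [y0 /eqP Hy0|none]; last first.
  by rewrite big_pred0.
pose x := if sh (regD y0) == ~~ c then y0 else rt y0.
have Hx : sh (regD x) = ~~ c.
  rewrite /x; case: eqP => // H; rewrite sh_rot.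
  by move: H; case: (sh _); case: (c).
have Cx : fconnect rt y0 x by rewrite /x; case: eqP => _; [exact: connect0|exact: fconnect1].
rewrite (eq_bigl (fun y => fconnect rt x y)); last first.
  move=> y; rewrite -Hy0 /vert fingraph.root_connect; last exact: rt_sym.
  by rewrite rt_sym (same_connect rt_sym Cx).
under eq_bigr => y _ do rewrite h_edge.
rewrite sum_orbit.
case: (shaded_alt Hx) => -> -> -> ->.
have H1 : colb (rt (rt x)) = ~~ colb (ed (rt x)).
  rewrite -(colb_phi Hev); first by rewrite /phi edK.
  by rewrite sh_ed sh_rot Hx negbK.
have H2 : colb x = ~~ colb (ed (rt (rt (rt x)))).
  rewrite -(colb_phi Hev); first by rewrite /phi edK rt4.
  by rewrite sh_ed !sh_rot Hx !negbK.
rewrite H1 H2.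
case: (colb (ed (rt x))); case: (colb (ed (rt (rt (rt x))))) => /=;
  by rewrite ?addr0 ?add0r ?F2_add_self // addrC -!addrA ?F2_add_self ?addr0 ?F2_add_self.
Qed.

Lemma arith (k1 i1 k2 i2 n E nl R V cc F : nat) :
  (k1 * i1 = 2 ^ (E + nl) -> 2 ^ n <= i1 -> V <= n + cc -> V + F = E + 2 * cc ->
  R + (cc + nl) = F + 2 * nl + 1 -> k2 * i2 = 2 ^ R -> k2 <= 2 -> 0 < R -> k1 <= i2)%N.
Proof.
move=> H1 H2 H3 H4 H5 H6 H7 H8.
have HE : (E + nl <= n + R.-1)%N by lia.
have Hk1 : (k1 <= 2 ^ R.-1)%N.
  rewrite -(@leq_pmul2r (2 ^ n)) ?expn_gt0 // -expnD addnC.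
  apply: leq_trans (leq_pexp2l _ HE) => //.
  by rewrite -H1 leq_mul2l H2 orbT.
apply: leq_trans Hk1 _.
rewrite -(@leq_pmul2l 2) // -expnS prednK // -H6; nia.
Qed.

Lemma card_T1 : #|{: T1}| = (fcard ed (D L) + nl L)%N.
Proof.
rewrite card_sum card_ord card_sig; congr (_ + _)%N.
by rewrite /n_comp_mem; apply: eq_card => x; rewrite !inE andbT.
Qed.

Lemma card_Sv_eq : #|Sv| = fcard rt (D L).
Proof. by rewrite /n_comp_mem; apply: eq_card => x; rewrite !inE andbT. Qed.

Variable Hpos : (0 < #|D L| + nl L)%N.
Variable Heuler : (fcard rt (D L) + fcard (@phi L) (D L)
        = fcard ed (D L) + 2 * n_comp ma (D L))%N.
Variable Htree : (#|Reg L| + (n_comp ma (D L) + nl L)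
        = fcard (@phi L) (D L) + 2 * nl L + 1)%N.

Definition Im2 := [set d2 s | s in [set: {ffun Reg L -> 'F_2}]].
Definition K1 := [set z | d1 z == 0].

Lemma Reg_pos : (0 < #|Reg L|)%N.
Proof.
case: (posnP #|D L|) => [H0|Hd].
  have : (0 < nl L)%N by move: Hpos; rewrite H0.
  by case: (nl L) (regIn L) => // n f _; apply/card_gt0P; exists (f ord0).
by move/card_gt0P: Hd => [d _]; apply/card_gt0P; exists (regD d).
Qed.

Lemma h_Im2 : h \in Im2.
Proof.
have Hsub : Im2 \subset K1.
  by apply/subsetP => z /imsetP [s _ ->]; rewrite inE d1d2.
have Hc : (#|K1| <= #|Im2|)%N.
  have H1 := card_hom d1D; rewrite card_T1 in H1.
  have H2 := card_hom d2D.
  have He := Heuler; rewrite -card_Sv_eq in He.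
  exact: (arith H1 card_Im1 card_Sv He Htree H2 card_ker_d2 Reg_pos).
have /eqP E : Im2 == K1 by rewrite eqEcard Hsub Hc.
by rewrite E inE h_ker.
Qed.

Lemma F2_sub (a b e : 'F_2) : a = b + e -> e = a + b.
Proof. by move=> ->; rewrite [b + e]addrC -addrA F2_add_self addr0. Qed.

Lemma hard : alt_signing sh c.
Proof.
case/imsetP: h_Im2 => S _ HS.
exists (fun r => S r == 1) => d.
pose x0 := if sh (regD d) == ~~ c then d else rt d.
have Hx0 : sh (regD x0) = ~~ c.
  rewrite /x0; case: eqP => // H; rewrite sh_rot.
  by move: H; case: (sh _); case: (c).
have C0 : fconnect rt d x0 by rewrite /x0; case: eqP => _; [exact: connect0|exact: fconnect1].
set w := rt (rt (rt x0)).
exists (rt x0), w; split.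
- exact: connect_trans C0 (fconnect1 _ _).
- exact: connect_trans C0 (rt_conn _ 3).
- by rewrite sh_rot Hx0 negbK.
- by rewrite /w !sh_rot Hx0 !negbK.
have E1 : h (inl (edge x0)) = S (regD x0) + S (regD (rt x0)).
  by rewrite HS d2_edge regD_rot.
have E2 : h (inl (edge w)) = S (regD w) + S (regD x0).
  by rewrite HS d2_edge -regD_rot /w rt4.
case: (shaded_alt Hx0) => Sd0 _ _ Sdw.
rewrite !h_edge Sd0 -/w Sdw in E1 E2.
have Hc : colb x0 = ~~ colb (ed w).
  rewrite -(colb_phi Hev); first by rewrite /phi edK /w rt4.
  by rewrite sh_ed /w !sh_rot Hx0 !negbK.
have Hsum : S (regD (rt x0)) + S (regD w) = 1.
  rewrite (F2_sub E1) (F2_sub (etrans E2 (addrC _ _))) addrACA F2_add_self addr0 Hc.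
  by case: (colb (ed w)); rewrite /= ?addr0 ?add0r ?F2_add_self.
case: (F2_cases (S (regD (rt x0)))) Hsum => ->; case: (F2_cases (S (regD w))) => ->;
  rewrite ?F2_add_self ?addr0 ?add0r ?eqxx //=.
Qed.
End Basics.

Theorem mainTheorem14 (L : diagram) (sh : Reg L -> bool) :
  link_diagram L -> checkerboard sh ->
  (alt_signing sh false <-> even_boundaries sh true) /\
  (alt_signing sh true <-> even_boundaries sh false).
Proof.
move=> [Hpos Hed Hrot Hphi [Heuler Hconn Htree]] [Hcb _].
split; split.
- exact: easy.
- by move=> Hev; apply: (@hard L Hed Hrot Hphi sh Hcb Hconn false Hev Hpos Heuler Htree).
- exact: easy.
- by move=> Hev; apply: (@hard L Hed Hrot Hphi sh Hcb Hconn true Hev Hpos Heuler Htree).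
Qed.
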